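(* Let $D$ be a principal ideal domain, $n$ a positive integer, $h_1,\ldots,h_n\in D$, and let $A$ be the $n\times n$ lower triangular Toeplitz matrix whose $(i,j)$ entry is $h_{n-i+j}$ for $i\ge j$ and $0$ for $i<j$. For $1\le c\le n$ let $A_c$ be the $(n-c+1)\times c$ submatrix of $A$ formed by columns $1,\ldots,c$ and rows $c,\ldots,n$. Then for $1\le k\le \frac n2$, the $k$-th Smith normal form entry of $A_c$ is the same (up to units) for all $c$ with $k\le c\le \frac n2$.
   Context: For a $p\times q$ matrix $M$ over a PID with $p\ge q$, its Smith normal form entries $d_1\mid d_2\mid\cdots\mid d_q$ are the diagonal entries of $PMQ$ for invertible $P,Q$ making $PMQ$ diagonal with successive divisibility; they are unique up to units, and $d_k$ is the $k$-th entry. *)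

(* Defs.v *)
From HB Require Import structures.
From mathcomp Require Import all_boot all_order all_algebra.
Set Implicit Arguments. Unset Strict Implicit. Unset Printing Implicit Defensive.
Import GRing.Theory.
Local Open Scope ring_scope.

Definition rdvd (D : comPzRingType) (a b : D) : Prop := exists x : D, b = x * a.

Definition associated (D : comUnitRingType) (a b : D) : Prop :=
  exists u : D, u \is a GRing.unit /\ b = u * a.

Definition is_ideal (D : comPzRingType) (I : D -> Prop) : Prop :=
  [/\ I 0, (forall x y, I x -> I y -> I (x + y)) & (forall r x, I x -> I (r * x))].

Definition is_PID (D : idomainType) : Prop :=
  forall I : D -> Prop, is_ideal I -> exists g : D, forall x, I x <-> rdvd g x.

(* d (indexed from 0) is a list of Smith normal form entries of the p x q
   matrix M: P M Q is the rectangular diagonal matrix with entries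
   d 0, ..., d (q-1), with successive divisibility, P, Q invertible. *)
Definition smith_form (D : idomainType) (p q : nat) (M : 'M[D]_(p, q))
    (d : nat -> D) : Prop :=
  exists (P : 'M[D]_p) (Q : 'M[D]_q),
    [/\ P \in unitmx, Q \in unitmx,
        P *m M *m Q = \matrix_(i < p, j < q) (if (i : nat) == j then d i else 0)
      & forall i : nat, (i.+1 < q)%N -> rdvd (d i) (d i.+1)].

(* Entry (i,j) (0-based) of the lower triangular Toeplitz matrix A:
   h_{n-i'+j'} with 1-based i' = i+1, j' = j+1, i.e. h (n - i + j). *)
Definition toep_entry (D : idomainType) (n : nat) (h : nat -> D) (i j : nat) : D :=
  if (j <= i)%N then h (n - i + j)%N else 0.

Definition toepA (D : idomainType) (n : nat) (h : nat -> D) : 'M[D]_n :=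
  \matrix_(i < n, j < n) toep_entry n h i j.

(* A_c : rows c..n and columns 1..c of A (1-based), size (n-c+1) x c. *)
Definition subA (D : idomainType) (n : nat) (h : nat -> D) (c : nat)
    : 'M[D]_(n - c + 1, c) :=
  \matrix_(r < n - c + 1, s < c) toep_entry n h (r + c.-1)%N s.

(* Main.v *)
Require Import Defs.
From HB Require Import structures.
From mathcomp Require Import all_boot all_order all_algebra.
From mathcomp Require Import all_fingroup.
From mathcomp Require Import zify.
Import GRing.Theory.
Local Open Scope ring_scope.

Section Expand.
Variable R : comPzRingType.

Lemma det_mul_expand k p (X : 'M[R]_(k,p)) (Y : 'M[R]_(p,k)) :
  \det (X *m Y) = \sum_(f : {ffun 'I_k -> 'I_p})
     (\prod_a X a (f a)) * \det (\matrix_(a,b) Y (f a) b).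
Proof.
rewrite /determinant.
transitivity (\sum_(s : 'S_k) \sum_(f : {ffun 'I_k -> 'I_p})
   (-1) ^+ s * ((\prod_a X a (f a)) * \prod_a Y (f a) (s a))).
  apply: eq_bigr => s _; rewrite -big_distrr /=; congr (_ * _).
  rewrite (eq_bigr (fun a => \sum_j X a j * Y j (s a))); last by move=> a _; rewrite mxE.
  rewrite bigA_distr_bigA /=; apply: eq_bigr => f _; rewrite -big_split /=.
  done.
rewrite exchange_big /=; apply: eq_bigr => f _; rewrite big_distrr /=.
apply: eq_bigr => s _; rewrite mulrCA; congr (_ * (_ * _)).
by apply: eq_bigr => a _; rewrite mxE.
Qed.

Lemma det_rowmix k (M N : 'M[R]_k) t :
  \det (\matrix_(a,b) (M a b + t * N a b)) =
  \sum_(A : {set 'I_k}) t ^+ #|A| * \det (\matrix_(a,b) if a \in A then N a b else M a b).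
Proof.
rewrite /determinant.
transitivity (\sum_(s : 'S_k) \sum_(A : {set 'I_k})
   (-1) ^+ s * (t ^+ #|A| * \prod_a (if a \in A then N a (s a) else M a (s a)))).
  apply: eq_bigr => s _; rewrite -big_distrr /=; congr (_ * _).
  rewrite (eq_bigr (fun a => \sum_(j : bool) (if j then t * N a (s a) else M a (s a))));
    last by move=> a _; rewrite mxE big_bool /= addrC.
  rewrite bigA_distr_bigA /=.
  rewrite (reindex (fun A : {set 'I_k} => [ffun a => a \in A])) /=; last first.
    exists (fun f : {ffun 'I_k -> bool} => [set a | f a]) => [A _|f _].
      by apply/setP => a; rewrite inE ffunE.
    by apply/ffunP => a; rewrite ffunE inE.
  apply: eq_bigr => A _.
  rewrite (eq_bigr (fun a => (if a \in A then t else 1) * (if a \in A then N a (s a) else M a (s a))));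
    last by move=> a _; rewrite ffunE; case: (a \in A); rewrite ?mul1r.
  rewrite big_split /=; congr (_ * _).
  by rewrite -big_mkcond /= prodr_const.
rewrite exchange_big /=; apply: eq_bigr => A _; rewrite big_distrr /=.
apply: eq_bigr => s _; rewrite mulrCA; congr (_ * (_ * _)).
by apply: eq_bigr => a _; rewrite mxE.
Qed.
End Expand.
Arguments det_mul_expand {R k p}. Arguments det_rowmix {R k}.

Section RC.
Variable D : idomainType.

Definition rowmix k (A : {set 'I_k}) (M N : 'M[D]_k) : 'M[D]_k :=
  \matrix_(a,b) if a \in A then N a b else M a b.
Definition colmix k (B : {set 'I_k}) (M N : 'M[D]_k) : 'M[D]_k :=
  \matrix_(a,b) if b \in B then N a b else M a b.

Arguments rowmix {k}. Arguments colmix {k}.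
Lemma coef_sumX k (c : {set 'I_k} -> D) L :
  (\sum_(A : {set 'I_k}) 'X ^+ #|A| * (c A)%:P)`_L = \sum_(A : {set 'I_k} | #|A| == L) c A.
Proof.
rewrite coef_sum [RHS]big_mkcond /=; apply: eq_bigr => A _.
rewrite mulrC mul_polyC coefZ coefXn eq_sym.
by case: (_ == _); rewrite ?mulr1 ?mulr0.
Qed.

Lemma rowcol k (M N : 'M[D]_k) L :
  \sum_(A : {set 'I_k} | #|A| == L) \det (rowmix A M N) =
  \sum_(B : {set 'I_k} | #|B| == L) \det (colmix B M N).
Proof.
pose Mp := map_mx polyC M; pose Np := map_mx polyC N.
have E1 : \det (\matrix_(a,b) (Mp a b + 'X * Np a b)) =
   \sum_(A : {set 'I_k}) 'X ^+ #|A| * (\det (rowmix A M N))%:P.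
  rewrite det_rowmix; apply: eq_bigr => A _; congr (_ * _).
  rewrite -det_map_mx; congr (\det _); apply/matrixP => a b.
  by rewrite !mxE; case: (a \in A).
have E2 : \det (\matrix_(a,b) (Mp a b + 'X * Np a b)) =
   \sum_(B : {set 'I_k}) 'X ^+ #|B| * (\det (colmix B M N))%:P.
  rewrite -det_tr.
  have -> : (\matrix_(a,b) (Mp a b + 'X * Np a b))^T =
            \matrix_(a,b) (Mp^T a b + 'X * Np^T a b).
    by apply/matrixP => a b; rewrite !mxE.
  rewrite det_rowmix; apply: eq_bigr => B _; congr (_ * _).
  rewrite -det_map_mx -(det_tr (map_mx _ _)); congr (\det _); apply/matrixP => a b. by rewrite !mxE; case: (a \in B).
by rewrite -!coef_sumX -E1 -E2.
Qed.
End RC.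
Arguments rowmix {D k}. Arguments colmix {D k}. Arguments rowcol {D k}.

Inductive gen (D : comPzRingType) (S : D -> Prop) : D -> Prop :=
 | gen0 : gen D S 0
 | genS x : S x -> gen D S x
 | genD x y : gen D S x -> gen D S y -> gen D S (x + y)
 | genM r x : gen D S x -> gen D S (r * x).
Arguments gen {D}.
Arguments gen0 {D S}.
Arguments genS {D S}.
Arguments genD {D S}.
Arguments genM {D S}.

Section GenTheory.
Variable D : comPzRingType.
Implicit Types S T : D -> Prop.

Lemma genN S x : gen S x -> gen S (- x).
Proof. by move=> h; rewrite -mulN1r; apply: genM. Qed.
Lemma genB S x y : gen S x -> gen S y -> gen S (x - y).
Proof. by move=> hx hy; apply: genD => //; apply: genN. Qed.
Lemma gen_eq0 S x : x = 0 -> gen S x.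
Proof. by move->; apply: gen0. Qed.
Lemma gen_sum S (I : Type) (r : seq I) (P : pred I) (F : I -> D) :
  (forall i, P i -> gen S (F i)) -> gen S (\sum_(i <- r | P i) F i).
Proof.
move=> h; elim: r => [|i r IH]; first by rewrite big_nil; apply: gen0.
rewrite big_cons; case: ifP => Pi //; exact: genD (h i Pi) IH.
Qed.
Lemma gen_mono S T : (forall x, S x -> gen T x) -> forall x, gen S x -> gen T x.
Proof.
move=> h x; elim => [|z /h //|z w _ ? _ ?|r z _ ?].
- exact: gen0.
- exact: genD.
- exact: genM.
Qed.
End GenTheory.

Section Hankel.
Variable D : idomainType.
Variable y : nat -> D.

Definition hmin {k} (I J : 'I_k -> nat) : D := \det (\matrix_(a, b) y (I a + J b)).

Definition HB (k R C : nat) (x : D) : Prop :=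
  exists I J : 'I_k -> nat, [/\ (forall a, I a <= R)%N, (forall b, J b <= C)%N & x = hmin I J].

Lemma hmin_tr k I J : hmin (k:=k) I J = hmin J I.
Proof. rewrite /hmin -det_tr; congr (\det _); apply/matrixP => a b; by rewrite !mxE addnC. Qed.

Lemma HB_tr k R C x : HB k R C x -> HB k C R x.
Proof. by case=> I [J [hI hJ ->]]; exists J, I; split => //; rewrite hmin_tr. Qed.

Lemma hmin_noninj k I J : ~~ injectiveb J -> hmin (k:=k) I J = 0.
Proof.
case/injectivePn => b1 [b2 neq eqJ].
rewrite /hmin -det_tr; apply: (determinant_alternate neq) => a.
by rewrite !mxE eqJ.
Qed.


Definition covers (C m : nat) {k} (J : 'I_k -> nat) : bool :=
  all (fun x => x \in codom J) (iota m (C.+1 - m)).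

Lemma coversP C m k (J : 'I_k -> nat) :
  reflect (forall x, (m <= x)%N -> (x <= C)%N -> exists b, J b = x) (covers C m J).
Proof.
apply: (iffP allP) => [h x hx1 hx2 | h x].
- have : x \in iota m (C.+1 - m) by rewrite mem_iota; lia.
  by move/h/codomP => [b ->]; exists b.
- rewrite mem_iota => hx; have [b <-] : exists b, J b = x by apply: h; lia.
  exact: codom_f.
Qed.

Definition QQ {k} R C (I : 'I_k -> nat) m := forall J : 'I_k -> nat,
  (forall b, J b <= C)%N -> ~~ covers C m J -> gen (HB k R.+1 C.-1) (hmin I J).

Lemma hankel_step k R C (hC : (0 < C)%N) (I : 'I_k -> nat) (hI : forall a, (I a <= R)%N) m :
  (m <= C)%N -> QQ R C I m.+1 -> QQ R C I m.
Proof.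
move=> hm IH J hJ ncov.
case cov1: (covers C m.+1 J); last by apply: IH => //; rewrite cov1.
have nm : forall b, J b != m.
  move=> b; apply/eqP => Jbm; move/negP: ncov; apply; apply/coversP => x hx1 hx2.
  case: (ltngtP x m) => [hxm|hxm|->]; [lia| |by exists b].
  by move/coversP: cov1 => /(_ x); apply.
case injJ: (injectiveb J); last by apply: gen_eq0; apply: hmin_noninj; rewrite injJ.
have /injectiveP Jinj := injJ.
pose B0 := [set b | (m.+1 <= J b)%N].
pose Js := fun b => (J b - (b \in B0))%N.
have hB0 : forall b, (b \in B0) = (m.+1 <= J b)%N by move=> b; rewrite inE.
have Jslt : forall b, (Js b <= C.-1)%N.
  move=> b; rewrite /Js hB0; have := hJ b; have := nm b; case: (ltnP m (J b)) => /= h1 h2 h3; lia.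
pose M := \matrix_(a, b) y (I a + Js b); pose N := \matrix_(a, b) y (I a + Js b + 1).
have hrc := rowcol M N #|B0|.
have hr : forall A, \det (rowmix A M N) = hmin (fun a => I a + (a \in A))%N Js.
  move=> A; congr (\det _); apply/matrixP => a b; rewrite !mxE.
  by case: (a \in A); rewrite /= ?addn0 ?addn1 // addnS addSn.
have hc : forall B, \det (colmix B M N) = hmin I (fun b => Js b + (b \in B))%N.
  move=> B; congr (\det _); apply/matrixP => a b; rewrite !mxE.
  by case: (b \in B); rewrite /= ?addn0 ?addn1 // addnS.
have hJ0 : hmin I (fun b => Js b + (b \in B0))%N = hmin I J.
  rewrite /hmin; congr (\det _); apply/matrixP => a b; rewrite !mxE /Js hB0.
  by congr (y _); case: (ltnP m (J b)) => h /=; lia.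
rewrite [X in _ = X](bigD1 B0) //= hc hJ0 in hrc.
have -> : hmin I J = \sum_(A : {set 'I_k} | #|A| == #|B0|) \det (rowmix A M N)
     - \sum_(B : {set 'I_k} | (#|B| == #|B0|) && (B != B0)) \det (colmix B M N).
  by rewrite hrc addrK.
apply: genB; apply: gen_sum.
  move=> A _; apply: genS; exists (fun a => I a + (a \in A))%N, Js; split.
  + by move=> a; have := hI a; case: (a \in A) => /=; lia.
  + exact: Jslt.
  + by rewrite hr.
move=> B /andP [cB nB]; rewrite hc.
pose J' := fun b => (Js b + (b \in B))%N.
have hJ' : forall b, (J' b <= C)%N.
  by move=> b; rewrite /J'; have := Jslt b; case: (b \in B) => /=; lia.
case injJ': (injectiveb J'); last by apply: gen_eq0; apply: hmin_noninj; rewrite injJ'.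
have /injectiveP J'inj := injJ'.
apply: IH => //; apply/negP => cov'.
pose s0 := map J (enum B0); pose s1 := map J' (enum B0); pose t := iota m.+1 (C.+1 - m.+1).
have u0 : uniq s0 by rewrite map_inj_uniq ?enum_uniq.
have u1 : uniq s1 by rewrite map_inj_uniq ?enum_uniq.
have ut : uniq t by apply: iota_uniq.
have t0 : {subset t <= s0}.
  move=> x; rewrite mem_iota => hx; have [b Jb] : exists b, J b = x by move/coversP: cov1; apply; lia.
  by rewrite -Jb; apply: map_f; rewrite mem_enum hB0 Jb; lia.
have t1 : {subset t <= s1}.
  move=> x; rewrite mem_iota => hx; have [b Jb] : exists b, J' b = x by move/coversP: cov'; apply; lia.
  rewrite -Jb; apply: map_f; rewrite mem_enum hB0.
  move: Jb; rewrite /J' /Js hB0; have := nm b.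
  by case: (ltnP m (J b)) => //= h1 /eqP h2; case: (b \in B) => /=; lia.
have s0t : {subset s0 <= t}.
  move=> x /mapP [b]; rewrite mem_enum hB0 => hb ->; rewrite mem_iota; have := hJ b; lia.
have [sz0 _] := uniq_min_size u0 s0t (uniq_leq_size ut t0).
have szt : (size s1 <= size t)%N by rewrite size_map -sz0 size_map.
have [_ eq1] := uniq_min_size ut t1 szt.
have p0 : perm_eq s0 t by apply: uniq_perm => // x; apply/idP/idP; [apply: s0t| apply: t0].
have p1 : perm_eq s1 t by apply: uniq_perm => // x; rewrite eq1.
have esum : (\sum_(b in B0) J b = \sum_(b in B0) J' b)%N.
  have := perm_sumn p0; have := perm_sumn p1; rewrite /s0 /s1 !sumnE !big_map !big_enum.
  by move=> -> ->.
have nsub : ~~ (B0 \subset B).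
  apply/negP => sub; move/negP: nB; apply; rewrite eq_sym eqEcard sub /=.
  by rewrite (eqP cB).
have [b0 b0B0 b0B] := subsetPn nsub.
move: esum; rewrite (bigD1 b0) //= [X in _ = X](bigD1 b0) //=.
have h1 : (J' b0 < J b0)%N.
  rewrite /J' /Js b0B0 (negPf b0B) /=; move: b0B0; rewrite hB0 => hh; clear -hh; lia.
have h2 : (\sum_(i in B0 | i != b0) J' i <= \sum_(i in B0 | i != b0) J i)%N.
  apply: leq_sum => b /andP [hb _]; rewrite /J' /Js hb /=; move: hb; rewrite hB0 => hb.
  by case: (b \in B) => /=; clear -hb; lia.
move=> esum; have := leq_add h1 h2; rewrite esum addSn ltnn //.
Qed.

Lemma hankel_core k R C : (0 < C)%N -> (k <= C)%N -> forall I J : 'I_k -> nat,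
  (forall a, I a <= R)%N -> (forall b, J b <= C)%N -> gen (HB k R.+1 C.-1) (hmin I J).
Proof.
move=> hC hk I J hI hJ.
have QC : QQ R C I C.+1.
  move=> J' _ /negP []; apply/coversP => x; lia.
have Qd : forall d, (d <= C.+1)%N -> QQ R C I (C.+1 - d).
  elim => [_|d IHd hd]; first by rewrite subn0.
  have e1 : (C.+1 - d.+1 = C - d)%N by lia.
  rewrite e1; apply: hankel_step => //; first lia.
  have e2 : (C.+1 - d = (C - d).+1)%N by lia.
  by rewrite -e2; apply: IHd; lia.
have := Qd C.+1 (leqnn _); rewrite subnn => Q0; apply: Q0 => //.
apply/negP => /coversP cov.
have : (size (iota 0 C.+1) <= size (codom J))%N.
  apply: uniq_leq_size; first exact: iota_uniq.
  move=> x; rewrite mem_iota => hx; have [b <-] : exists b, J b = x by apply: cov; lia.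
  exact: codom_f.
rewrite size_iota size_codom card_ord; lia.
Qed.

End Hankel.
Arguments hmin {D} y {k}. Arguments HB {D} y k R C x. Arguments hankel_core {D} y {k} R C. Arguments HB_tr {D} y {k R C x}.

Set Implicit Arguments. Unset Strict Implicit.
Section Minors.
Variable D : idomainType.

Definition minorS (k : nat) {p q} (M : 'M[D]_(p,q)) (x : D) : Prop :=
  exists (f : 'I_k -> 'I_p) (g : 'I_k -> 'I_q), x = \det (\matrix_(a,b) M (f a) (g b)).

Lemma minor_mull k p q r (X : 'M[D]_(r,p)) (M : 'M[D]_(p,q)) x :
  minorS k (X *m M) x -> gen (minorS k M) x.
Proof.
case=> f [g ->].
have -> : \matrix_(a,b) (X *m M) (f a) (g b) =
          (\matrix_(a,j) X (f a) j) *m (\matrix_(j,b) M j (g b)).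
  by apply/matrixP => a b; rewrite !mxE; apply: eq_bigr => j _; rewrite !mxE.
rewrite det_mul_expand; apply: gen_sum => h _; apply: genM; apply: genS.
by exists (fun a => h a), g; congr (\det _); apply/matrixP => a b; rewrite !mxE.
Qed.

Lemma minor_tr k p q (M : 'M[D]_(p,q)) x : minorS k M^T x -> minorS k M x.
Proof.
case=> f [g ->]; exists g, f; rewrite -det_tr; congr (\det _).
by apply/matrixP => a b; rewrite !mxE.
Qed.

Lemma minor_tr' k p q (M : 'M[D]_(p,q)) x : minorS k M x -> minorS k M^T x.
Proof.
case=> f [g ->]; exists g, f; rewrite -det_tr; congr (\det _).
by apply/matrixP => a b; rewrite !mxE.
Qed.

Lemma minor_mulr k p q r (M : 'M[D]_(p,q)) (Y : 'M[D]_(q,r)) x :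
  minorS k (M *m Y) x -> gen (minorS k M) x.
Proof.
move=> /minor_tr'; rewrite trmx_mul => /minor_mull.
by apply: gen_mono => z /minor_tr hz; apply: genS.
Qed.

Lemma minor_mulmx k p q p' q' (X : 'M[D]_(p',p)) (M : 'M[D]_(p,q)) (Y : 'M[D]_(q,q')) x :
  gen (minorS k (X *m M *m Y)) x -> gen (minorS k M) x.
Proof.
apply: gen_mono => z /minor_mulr; apply: gen_mono => w; exact: minor_mull.
Qed.

Lemma rdvd_refl (a : D) : rdvd a a. Proof. by exists 1; rewrite mul1r. Qed.
Lemma rdvd_trans (a b c : D) : rdvd a b -> rdvd b c -> rdvd a c.
Proof. by move=> [x ->] [z ->]; exists (z * x); rewrite mulrA. Qed.
Lemma rdvd0 (a : D) : rdvd a 0. Proof. by exists 0; rewrite mul0r. Qed.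
Lemma rdvdD (a b c : D) : rdvd a b -> rdvd a c -> rdvd a (b + c).
Proof. by move=> [x ->] [z ->]; exists (x + z); rewrite mulrDl. Qed.
Lemma rdvdMl (a b c : D) : rdvd a b -> rdvd a (c * b).
Proof. by move=> [x ->]; exists (c * x); rewrite mulrA. Qed.
Lemma rdvdMM (a b c e : D) : rdvd a b -> rdvd c e -> rdvd (a * c) (b * e).
Proof. by move=> [x ->] [z ->]; exists (x * z); rewrite mulrACA. Qed.
Lemma rdvd_sum (a : D) (I : Type) (r : seq I) (P : pred I) (F : I -> D) :
  (forall i, P i -> rdvd a (F i)) -> rdvd a (\sum_(i <- r | P i) F i).
Proof.
move=> h; elim: r => [|i r IH]; first by rewrite big_nil; apply: rdvd0.
rewrite big_cons; case: ifP => Pi //; exact: rdvdD (h i Pi) IH.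
Qed.
Lemma gen_rdvd (a : D) S x : (forall z, S z -> rdvd a z) -> gen S x -> rdvd a x.
Proof.
move=> h; elim => [|z /h //|z w _ ? _ ?|r z _ ?].
- exact: rdvd0.
- exact: rdvdD.
- exact: rdvdMl.
Qed.

Section Chain.
Variables (q : nat) (d : nat -> D).
Hypothesis hd : forall i : nat, (i.+1 < q)%N -> rdvd (d i) (d i.+1).

Lemma chain_dvd i j : (i <= j)%N -> (j < q)%N -> rdvd (d i) (d j).
Proof.
elim: j => [|j IH] hij hj.
  have -> : i = 0%N by lia.
  exact: rdvd_refl.
case: (ltngtP i j.+1) => h; try lia.
  by apply: rdvd_trans (IH _ _) (hd _); lia.
by rewrite h; apply: rdvd_refl.
Qed.

Lemma prod_dvd n (s : seq nat) : size s = n -> uniq s -> all (fun x => x < q)%N s ->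
  rdvd (\prod_(i < n) d i) (\prod_(x <- s) d x).
Proof.
elim: n s => [|n IH] s hs us qs; first by rewrite big_ord0; exists (\prod_(x <- s) d x); rewrite mulr1.
have [x xs xn] : exists2 x, x \in s & (n <= x)%N.
  case: (boolP (has (fun x => n <= x)%N s)) => [/hasP //|/hasPn hn].
  have : (size s <= size (iota 0 n))%N.
    apply: uniq_leq_size => // z zs; rewrite mem_iota /=; have := hn z zs; lia.
  rewrite size_iota hs; lia.
rewrite (perm_big _ (perm_to_rem xs)) big_cons big_ord_recr /= mulrC.
apply: rdvdMM.
  apply: chain_dvd => //; exact: (allP qs).
apply: IH; first by rewrite size_rem // hs.
  exact: rem_uniq.
by apply/allP => z /mem_rem zs; apply: (allP qs).
Qed.
End Chain.

Definition diagS p q (d : nat -> D) : 'M[D]_(p,q) :=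
  \matrix_(i < p, j < q) (if (i : nat) == j then d i else 0).

Lemma diag_minor_dvd p q (d : nat -> D) k x :
  (forall i : nat, (i.+1 < q)%N -> rdvd (d i) (d i.+1)) ->
  gen (minorS k (diagS p q d)) x -> rdvd (\prod_(i < k) d i) x.
Proof.
move=> hd; apply: gen_rdvd => z [f [g ->]].
case injf: (injectiveb f); last first.
  case/injectivePn: (negbT injf) => a1 [a2 neq eqf].
  rewrite (determinant_alternate neq); first exact: rdvd0.
  by move=> b; rewrite !mxE eqf.
have /injectiveP finj := injf.
rewrite /determinant; apply: rdvd_sum => s _; apply: rdvdMl.
case: (boolP [forall a, (f a : nat) == g (s a)]) => [/forallP h|].
  rewrite [X in rdvd _ X](eq_bigr (fun a => d (f a))); last by move=> a _; rewrite !mxE h.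
  have -> : \prod_a d (f a) = \prod_(x <- map (fun a => nat_of_ord (f a)) (enum 'I_k)) d x.
    by rewrite big_map big_enum.
  apply: (prod_dvd hd); first by rewrite size_map size_enum_ord.
    rewrite map_inj_uniq ?enum_uniq // => a1 a2 /= /val_inj; exact: finj.
  apply/allP => w /mapP [a _ ->]; rewrite (eqP (h a)); exact: ltn_ord.
rewrite negb_forall => /existsP [a ha].
rewrite [X in rdvd _ X](bigD1 a) //= !mxE (negPf ha) mul0r; exact: rdvd0.
Qed.

Lemma diag_minor_in p q (d : nat -> D) k : (k <= q)%N -> (q <= p)%N ->
  minorS k (diagS p q d) (\prod_(i < k) d i).
Proof.
move=> hkq hqp.
have hkp : (k <= p)%N by lia.
exists (widen_ord hkp), (widen_ord hkq).
have -> : \matrix_(a,b) diagS p q d (widen_ord hkp a) (widen_ord hkq b) =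
   diag_mx (\row_(i < k) d i).
  apply/matrixP => a b; rewrite !mxE /=.
  case: (eqVneq a b) => [->|neq]; rewrite ?eqxx ?mulr1n // ifN ?mulr0n //.
rewrite det_diag; apply: eq_bigr => i _; by rewrite mxE.
Qed.

Lemma smith_ideal p q (M : 'M[D]_(p,q)) d k : (k <= q)%N -> (q <= p)%N ->
  smith_form M d ->
  (forall x, gen (minorS k M) x -> rdvd (\prod_(i < k) d i) x) /\
  gen (minorS k M) (\prod_(i < k) d i).
Proof.
move=> hkq hqp [P [Q [Pu Qu eq hd]]].
have eD : P *m M *m Q = diagS p q d by rewrite eq.
have eM : M = invmx P *m diagS p q d *m invmx Q.
  by rewrite -eD !mulmxA mulVmx // mul1mx mulmxK.
split.
  move=> x hx; apply: (diag_minor_dvd hd).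
  by rewrite eM in hx; apply: minor_mulmx hx.
apply: (@minor_mulmx k p q p q P M Q); rewrite eD; apply: genS.
exact: diag_minor_in.
Qed.
End Minors.

Set Implicit Arguments. Unset Strict Implicit.

Section Final.
Variable D : idomainType.

Definition yh (h : nat -> D) := fun m => h m.+1.

Lemma subA_HB n (h : nat -> D) c k x : (0 < c)%N -> (c <= n)%N ->
  minorS k (subA n h c) x -> HB (yh h) k (n - c) c.-1 x.
Proof.
move=> hc hcn [f [g ->]].
exists (fun a => n - c - f a)%N, (fun b => nat_of_ord (g b)); split.
- by move=> a; lia.
- by move=> b; have := ltn_ord (g b); lia.
- rewrite /hmin; congr (\det _); apply/matrixP => a b; rewrite !mxE /toep_entry.
  have := ltn_ord (f a); have := ltn_ord (g b) => hg hf.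
  rewrite ifT; last by lia.
  by rewrite /yh; congr h; lia.
Qed.

Lemma HB_subA n (h : nat -> D) c k x : (0 < c)%N -> (c <= n)%N ->
  HB (yh h) k (n - c) c.-1 x -> minorS k (subA n h c) x.
Proof.
move=> hc hcn [I [J [hI hJ ->]]].
have PI : forall a, (n - c - I a < n - c + 1)%N by move=> a; lia.
have PJ : forall b, (J b < c)%N by move=> b; have := hJ b; lia.
exists (fun a => Ordinal (PI a)), (fun b => Ordinal (PJ b)).
rewrite /hmin; congr (\det _); apply/matrixP => a b; rewrite !mxE /toep_entry /=.
have := hI a; have := hJ b => h1 h2.
rewrite ifT; last by lia.
by rewrite /yh; congr h; lia.
Qed.

Definition G n (h : nat -> D) k c := gen (HB (yh h) k (n - c) c.-1).

Lemma G_step n h k c x : (0 < k)%N -> (k <= c)%N -> ((c.+1).*2 <= n)%N ->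
  G n h k c x <-> G n h k c.+1 x.
Proof.
move=> hk hkc hcn; split.
- apply: gen_mono => z /HB_tr [I [J [hI hJ ->]]].
  have := @hankel_core D (yh h) k (c.-1) (n - c) ltac:(lia) ltac:(lia) I J hI hJ.
  have -> : (c.-1.+1 = c)%N by lia.
  have -> : ((n - c).-1 = n - c.+1)%N by lia.
  by apply: gen_mono => w /HB_tr hw; apply: genS.
- apply: gen_mono => z [I [J [hI hJ ->]]].
  have := @hankel_core D (yh h) k (n - c.+1) c ltac:(lia) ltac:(lia) I J hI hJ.
  have -> : ((n - c.+1).+1 = n - c)%N by lia.
  by [].
Qed.

Lemma G_range n h k c d x : (0 < k)%N -> (k <= c)%N -> ((c + d).*2 <= n)%N ->
  G n h k c x <-> G n h k (c + d) x.
Proof.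
move=> hk hkc; elim: d => [|d IH] hd; first by rewrite addn0.
rewrite (IH ltac:(lia)) addnS; apply: G_step => //; lia.
Qed.

Lemma G_eq n h k c c' x : (0 < k)%N -> (k <= c)%N -> (k <= c')%N ->
  (c.*2 <= n)%N -> (c'.*2 <= n)%N -> G n h k c x -> G n h k c' x.
Proof.
move=> hk hc hc' hcn hcn'.
case: (leqP c c') => hle.
  have e : c' = (c + (c' - c))%N by lia.
  move=> Hx; have := proj1 (G_range (n:=n) (d:=c' - c) h x hk hc ltac:(lia)) Hx.
  by rewrite -e.
have e : c = (c' + (c - c'))%N by lia.
move=> Hx; apply: (proj2 (G_range (n:=n) (d:=c - c') h x hk hc' ltac:(lia))).
by rewrite -e.
Qed.

Lemma key n (h : nat -> D) c c' d d' j : (0 < j)%N -> (j <= c)%N -> (j <= c')%N ->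
  (c.*2 <= n)%N -> (c'.*2 <= n)%N ->
  smith_form (subA n h c) d -> smith_form (subA n h c') d' ->
  rdvd (\prod_(i < j) d' i) (\prod_(i < j) d i).
Proof.
move=> hj hc hc' hcn hcn' S S'.
have [_ inc] := smith_ideal (ltac:(lia) : (j <= c)%N) (ltac:(lia) : (c <= n - c + 1)%N) S.
have [dv _] := smith_ideal (ltac:(lia) : (j <= c')%N) (ltac:(lia) : (c' <= n - c' + 1)%N) S'.
apply: dv; move: inc; apply: gen_mono => z /subA_HB hz.
have : G n h j c z by apply: genS; apply: hz; lia.
move/(G_eq hj hc hc' hcn hcn'); apply: gen_mono => w hw; apply: genS.
by apply: HB_subA => //; lia.
Qed.

Lemma assoc_of_dvd (a b : D) : rdvd a b -> rdvd b a -> associated a b.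
Proof.
move=> [x hb] [z ha].
case: (eqVneq a 0) => [a0|an0].
  by exists 1; split; [exact: unitr1 | rewrite hb a0 !mulr0].
exists x; split => //.
apply/unitrPr; exists z.
apply: (mulIf an0).
by rewrite mul1r mulrAC -hb mulrC -ha.
Qed.

End Final.

Set Implicit Arguments.
Lemma prod0_dvd0 (D : idomainType) (p q : nat) (M : 'M[D]_(p,q)) d j :
  smith_form M d -> (j < q)%N -> \prod_(i < j) d i = 0 -> d j = 0.
Proof.
case=> P [Q [_ _ _ hd]] hj /eqP /prodf_eq0 [i _ /eqP di0].
have [x ->] := chain_dvd hd (ltnW (ltn_ord i)) hj.
by rewrite di0 mulr0.
Qed.

Unset Implicit Arguments.
Theorem lemma2 (D : idomainType) (hPID : is_PID D) (n : nat) (h : nat -> D)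
    (k c c' : nat) (d d' : nat -> D) :
  (0 < n)%N -> (1 <= k)%N ->
  (k <= c)%N -> (c.*2 <= n)%N ->
  (k <= c')%N -> (c'.*2 <= n)%N ->
  smith_form (subA n h c) d -> smith_form (subA n h c') d' ->
  associated (d k.-1) (d' k.-1).
Proof.
move=> hn hk hkc hc hkc' hc' S S'.
have dv : forall j, (0 < j)%N -> (j <= k)%N ->
    associated (\prod_(i < j) d i) (\prod_(i < j) d' i).
  move=> j hj hjk; apply: assoc_of_dvd.
    by apply: (key hj _ _ hc' hc S' S); lia.
  by apply: (key hj _ _ hc hc' S S'); lia.
case: k hk hkc hkc' dv => [//|k] _ hkc hkc' dv /=.
case: k hkc hkc' dv => [|j] hkc hkc' dv.
  by have := dv 1%N isT (leqnn _); rewrite !big_ord1.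
have [u [uU e1]] := dv j.+1 isT (leqnSn _).
have := dv j.+2 isT (leqnn _); rewrite !(big_ord_recr j.+1) /= => -[v [vU e2]].
case: (eqVneq (\prod_(i < j.+1) d i) 0) => p0.
  have dj : d j.+1 = 0 by apply: (prod0_dvd0 S) => //; lia.
  have dj' : d' j.+1 = 0.
    apply: (prod0_dvd0 S'); first lia. by rewrite e1 p0 mulr0.
  by exists 1; split; [exact: unitr1 | rewrite dj dj' mulr0].
exists (u^-1 * v); split; first by rewrite unitrM unitrV uU vU.
rewrite e1 -mulrA mulrCA (mulrCA v) in e2.
have := mulfI p0 e2 => /(congr1 ( *%R u^-1)) /=; rewrite mulKr // => ->.
by rewrite mulrA.
Qed.
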